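(* Assume (C1) and (C2). For any $u\in\mathcal{D}$ with $u^+\neq0$ and $u^-\neq0$, there exists a unique pair of positive constants $(s_0,t_0)$ such that $s_0u^++t_0u^-\in\mathcal{M}$.
   Context: Fix real numbers $p,q,r$ with $1<p<q$, $\frac p2$ a positive integer, and $r\ge1$, and functions $a,b,c:\mathbb{Z}\to(0,+\infty)$. Conditions: - (C1) There is $b_0>0$ with $b(n)\ge b_0$ for all $n$ and $b(n)\to+\infty$ as $|n|\to\infty$. - (C2) There is $c_0>0$ with $c(n)\le c_0$ for all $n$ and $\sum_n c(n)<+\infty$. Notation for a real sequence $u=(u(n))_{n\in\mathbb{Z}}$: $\Delta u(n)=u(n+1)-u(n)$, $u^+(n)=\max\{u(n),0\}$, $u^-(n)=\min\{u(n),0\}$. Spaces: - $E$ is the set of real sequences $u$ with $\|u\|:=\big(\sum_n[a(n)|\Delta u(n)|^p+b(n)|u(n)|^p]\big)^{1/p}<\infty$. - $\mathcal{D}=\{u\in E:\sum_n c(n)|u(n)|^q\ln|u(n)|^r<+\infty\}$, where terms with $u(n)=0$ are read as $0$. For $u,v\in\mathcal{D}$: $$\langle I'(u),v\rangle=\sum_n[a(n)|\Delta u(n)|^{p-2}\Delta u(n)\Delta v(n)+b(n)|u(n)|^{p-2}u(n)v(n)]-\sum_n c(n)|u(n)|^{q-2}u(n)v(n)\ln|u(n)|^r.$$ $\mathcal{M}=\{u\in\mathcal{D}:u^+\ne0,\ u^-\neq0,\ \langle I'(u),u^+\rangle=0,\ \langle I'(u),u^-\rangle=0\}$. *)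

(* Defs.v *)
From Stdlib Require Import Reals ZArith.
From Coquelicot Require Import Coquelicot.
Open Scope R_scope.

(* Real power of a nonnegative base with the usual conventions at 0:
   0^0 = 1 and 0^y = 0 for y <> 0 (Stdlib's Rpower is only meaningful for x > 0). *)
Definition rpow (x y : R) : R :=
  match Rle_dec x 0 with
  | left _ => match Req_EM_T y 0 with left _ => 1 | right _ => 0 end
  | right _ => Rpower x y
  end.

Definition ex_sumZ (f : Z -> R) : Prop :=
  ex_series (fun n : nat => f (Z.of_nat n)) /\
  ex_series (fun n : nat => f (- Z.of_nat n - 1)%Z).

Definition sumZ (f : Z -> R) : R :=
  Series (fun n : nat => f (Z.of_nat n)) + Series (fun n : nat => f (- Z.of_nat n - 1)%Z).

Definition Delta (u : Z -> R) (n : Z) : R := u (n + 1)%Z - u n.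
Definition upos (u : Z -> R) : Z -> R := fun n => Rmax (u n) 0.
Definition uneg (u : Z -> R) : Z -> R := fun n => Rmin (u n) 0.
Definition zero_seq : Z -> R := fun _ => 0.

Definition cond_C1 (b : Z -> R) : Prop :=
  (exists b0, 0 < b0 /\ forall n, b0 <= b n) /\
  (forall M : R, exists N : Z, forall n : Z, (N < Z.abs n)%Z -> M < b n).

Definition cond_C2 (c : Z -> R) : Prop :=
  (exists c0, 0 < c0 /\ forall n, c n <= c0) /\ ex_sumZ c.

Definition inE (p : R) (a b : Z -> R) (u : Z -> R) : Prop :=
  ex_sumZ (fun n => a n * rpow (Rabs (Delta u n)) p + b n * rpow (Rabs (u n)) p).

Definition logterm (q r : R) (c : Z -> R) (u : Z -> R) (n : Z) : R :=
  if Req_EM_T (u n) 0 then 0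
  else c n * rpow (Rabs (u n)) q * ln (rpow (Rabs (u n)) r).

Definition inD (p q r : R) (a b c : Z -> R) (u : Z -> R) : Prop :=
  inE p a b u /\ ex_sumZ (fun n => Rabs (logterm q r c u n)).

Definition dI (p q r : R) (a b c : Z -> R) (u v : Z -> R) : R :=
  sumZ (fun n => a n * rpow (Rabs (Delta u n)) (p - 2) * Delta u n * Delta v n
               + b n * rpow (Rabs (u n)) (p - 2) * u n * v n)
  - sumZ (fun n => if Req_EM_T (u n) 0 then 0
                   else c n * rpow (Rabs (u n)) (q - 2) * u n * v n
                        * ln (rpow (Rabs (u n)) r)).

Definition inM (p q r : R) (a b c : Z -> R) (u : Z -> R) : Prop :=
  inD p q r a b c u /\ upos u <> zero_seq /\ uneg u <> zero_seq /\
  dI p q r a b c u (upos u) = 0 /\ dI p q r a b c u (uneg u) = 0.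

(* Main.v *)
Require Import Defs.
From Stdlib Require Import Reals ZArith.
From Coquelicot Require Import Coquelicot.
Open Scope R_scope.
From Stdlib Require Import Ranalysis5 Lra Lia Psatz FunctionalExtensionality Classical ClassicalEpsilon.
Require Import Defs.

Lemma Series0 : Series (fun _ : nat => 0) = 0.
Proof. rewrite (Series_ext _ (fun n : nat => 0 * 0)) by (intro; ring). rewrite Series_scal_l; ring. Qed.

Lemma exS_le (f g : nat -> R) : (forall n, Rabs (f n) <= g n) -> ex_series g -> ex_series f.
Proof. intros H Hg. apply (ex_series_le f g); [intro n; apply H| exact Hg]. Qed.

Lemma SeriesR_le (f g : nat -> R) : ex_series f -> ex_series g -> (forall n, f n <= g n) -> Series f <= Series g.
Proof.
  intros Hf Hg H.
  assert (Series g - Series f = Series (fun n => g n - f n)) by (rewrite Series_minus; auto).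
  assert (0 <= Series (fun n => g n - f n)).
  { replace 0 with (Series (fun _ => 0)).
    apply Series_le. intro n; specialize (H n); lra.
    apply (ex_series_minus g f); auto.
    rewrite Series0; auto. }
  lra.
Qed.

Lemma SeriesR_abs (f g : nat -> R) : ex_series g -> (forall n, Rabs (f n) <= g n) -> Rabs (Series f) <= Series g.
Proof.
  intros Hg H.
  assert (Hf : ex_series (fun n => Rabs (f n))).
  { apply (exS_le _ g); auto. intro n; rewrite Rabs_Rabsolu; auto. }
  eapply Rle_trans. apply Series_Rabs; auto.
  apply SeriesR_le; auto.
Qed.

Lemma SeriesR_term (f : nat -> R) k : (forall n, 0 <= f n) -> ex_series f -> f k <= Series f.
Proof.
  intros H Hf.
  rewrite (Series_incr_n f (S k)); [|lia|auto].
  simpl pred.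
  assert (0 <= Series (fun n => f (S k + n)%nat)).
  { replace 0 with (Series (fun _ => 0)) by (rewrite Series0; auto).
    apply Series_le. intro n; split; [lra| apply H].
    apply (ex_series_incr_n f (S k)); auto. }
  assert (f k <= sum_f_R0 f k).
  { destruct k. simpl; lra. simpl. pose proof (cond_pos_sum f k H). lra. }
  lra.
Qed.



Lemma exZ_le (f g : Z -> R) : (forall n, Rabs (f n) <= g n) -> ex_sumZ g -> ex_sumZ f.
Proof. intros H [H1 H2]; split;
  [apply (exS_le _ (fun n => g (Z.of_nat n))) | apply (exS_le _ (fun n => g (- Z.of_nat n - 1)%Z))]; auto. Qed.

Lemma exZ_plus (f g : Z -> R) : ex_sumZ f -> ex_sumZ g -> ex_sumZ (fun n => f n + g n).
Proof. intros [H1 H2] [H3 H4]; split;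
  [apply (ex_series_plus (fun n => f (Z.of_nat n)) (fun n => g (Z.of_nat n)))
  |apply (ex_series_plus (fun n => f (- Z.of_nat n - 1)%Z) (fun n => g (- Z.of_nat n - 1)%Z))]; auto. Qed.

Lemma exZ_scal (k : R) (f : Z -> R) : ex_sumZ f -> ex_sumZ (fun n => k * f n).
Proof. intros [H1 H2]; split;
  [apply (ex_series_scal_l k (fun n => f (Z.of_nat n)))
  |apply (ex_series_scal_l k (fun n => f (- Z.of_nat n - 1)%Z))]; auto. Qed.

Lemma sumZ_ext (f g : Z -> R) : (forall n, f n = g n) -> sumZ f = sumZ g.
Proof. intros H; unfold sumZ; rewrite (Series_ext _ _ (fun n => H _)), (Series_ext _ _ (fun n => H (- Z.of_nat n - 1)%Z)); auto. Qed.

Lemma sumZ_scal (k : R) (f : Z -> R) : sumZ (fun n => k * f n) = k * sumZ f.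
Proof. unfold sumZ; rewrite !Series_scal_l; ring. Qed.

Lemma sumZ_plus (f g : Z -> R) : ex_sumZ f -> ex_sumZ g -> sumZ (fun n => f n + g n) = sumZ f + sumZ g.
Proof. intros [H1 H2] [H3 H4]; unfold sumZ; rewrite !Series_plus; auto; ring. Qed.

Lemma sumZ_minus (f g : Z -> R) : ex_sumZ f -> ex_sumZ g -> sumZ (fun n => f n - g n) = sumZ f - sumZ g.
Proof. intros [H1 H2] [H3 H4]; unfold sumZ; rewrite !Series_minus; auto; ring. Qed.

Lemma sumZ_le (f g : Z -> R) : ex_sumZ f -> ex_sumZ g -> (forall n, f n <= g n) -> sumZ f <= sumZ g.
Proof. intros [H1 H2] [H3 H4] H; unfold sumZ. apply Rplus_le_compat; apply SeriesR_le; auto. Qed.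

Lemma sumZ_abs (f g : Z -> R) : ex_sumZ g -> (forall n, Rabs (f n) <= g n) -> Rabs (sumZ f) <= sumZ g.
Proof. intros [H1 H2] H; unfold sumZ.
  eapply Rle_trans. apply Rabs_triang. apply Rplus_le_compat; apply SeriesR_abs; auto. Qed.

Lemma sumZ_term (f : Z -> R) k : (forall n, 0 <= f n) -> ex_sumZ f -> f k <= sumZ f.
Proof.
  intros H [H1 H2]; unfold sumZ.
  assert (A1 : 0 <= Series (fun n : nat => f (Z.of_nat n))).
  { eapply Rle_trans. 2: apply (SeriesR_term _ 0); auto. apply H. }
  assert (A2 : 0 <= Series (fun n : nat => f (- Z.of_nat n - 1)%Z)).
  { eapply Rle_trans. 2: apply (SeriesR_term _ 0); auto. apply H. }
  destruct (Z_le_gt_dec 0 k).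
  - pose proof (SeriesR_term (fun n : nat => f (Z.of_nat n)) (Z.to_nat k) (fun n => H _) H1) as T.
    simpl in T. rewrite Z2Nat.id in T; auto. lra.
  - pose proof (SeriesR_term (fun n : nat => f (- Z.of_nat n - 1)%Z) (Z.to_nat (- k - 1)) (fun n => H _) H2) as T.
    simpl in T. rewrite Z2Nat.id in T by lia. replace (- (- k - 1) - 1)%Z with k in T by lia. lra.
Qed.


Lemma pow_even_abs (y : R) (j : nat) : (Rabs y)^(2*j) = y^(2*j).
Proof. rewrite !pow_mult. f_equal. pose proof (Rsqr_abs y) as H. unfold Rsqr in H. simpl. lra. Qed.

Lemma pow_odd_opp (x : R) (j : nat) : (-x)^(2*j+1) = -(x^(2*j+1)).
Proof.
  replace (-x) with ((-1)*x) by ring. rewrite Rpow_mult_distr.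
  replace (2*j+1)%nat with (S (2*j)) by lia. rewrite pow_1_odd. ring.
Qed.

Lemma rpow_pos (x y : R) : 0 < x -> rpow x y = Rpower x y.
Proof. intro H; unfold rpow; destruct (Rle_dec x 0); [lra|auto]. Qed.

Lemma rpow_0 (y : R) : y <> 0 -> rpow 0 y = 0.
Proof. intro H; unfold rpow; destruct (Rle_dec 0 0); [|lra].
  destruct (Req_EM_T y 0); [contradiction|auto]. Qed.

Lemma rpow_even (y : R) (j : nat) : rpow (Rabs y) (INR (2*j+2)) = y^(2*j+2).
Proof.
  destruct (Req_dec y 0) as [->|Hy].
  - rewrite Rabs_R0, rpow_0. rewrite pow_i; [auto|lia].
    apply Rgt_not_eq. rewrite plus_INR; pose proof (pos_INR (2*j)). change (INR 2) with 2. lra.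
  - rewrite rpow_pos by (apply Rabs_pos_lt; auto). rewrite Rpower_pow by (apply Rabs_pos_lt; auto).
    replace (2*j+2)%nat with (2*(j+1))%nat by lia. apply pow_even_abs.
Qed.

Lemma rpow_odd (y : R) (j : nat) : rpow (Rabs y) (INR (2*j+2) - 2) * y = y^(2*j+1).
Proof.
  replace (INR (2*j+2) - 2) with (INR (2*j)) by (rewrite !plus_INR; simpl; ring).
  destruct (Req_dec y 0) as [->|Hy].
  - rewrite pow_i; [ring|lia].
  - rewrite rpow_pos by (apply Rabs_pos_lt; auto). rewrite Rpower_pow by (apply Rabs_pos_lt; auto).
    rewrite pow_even_abs. replace (2*j+1)%nat with (S (2*j)) by lia. simpl. ring.
Qed.

Definition wv (v : Z -> R) (s t : R) : Z -> R := fun n => s * upos v n + t * uneg v n.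

Lemma upos_nonneg v n : 0 <= upos v n.
Proof. unfold upos, Rmax; destruct Rle_dec; lra. Qed.
Lemma uneg_nonpos v n : uneg v n <= 0.
Proof. unfold uneg, Rmin; destruct Rle_dec; lra. Qed.
Lemma upos_uneg v n : upos v n * uneg v n = 0.
Proof. unfold upos, uneg, Rmax, Rmin; repeat destruct (Rle_dec _ _); nra. Qed.
Lemma upos_plus_uneg v n : upos v n + uneg v n = v n.
Proof. unfold upos, uneg, Rmax, Rmin; repeat destruct (Rle_dec _ _); lra. Qed.
Lemma upos_pos v n : 0 < v n -> upos v n = v n.
Proof. unfold upos, Rmax; destruct Rle_dec; lra. Qed.
Lemma upos_npos v n : v n <= 0 -> upos v n = 0.
Proof. unfold upos, Rmax; destruct Rle_dec; lra. Qed.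
Lemma uneg_neg v n : v n < 0 -> uneg v n = v n.
Proof. unfold uneg, Rmin; destruct Rle_dec; lra. Qed.
Lemma uneg_nneg v n : 0 <= v n -> uneg v n = 0.
Proof. unfold uneg, Rmin; destruct Rle_dec; lra. Qed.

Lemma upos_w v s t n : 0 < s -> 0 < t -> upos (wv v s t) n = s * upos v n.
Proof.
  intros Hs Ht. unfold upos at 1. change (wv v s t n) with (s * upos v n + t * uneg v n).
  destruct (Rlt_le_dec 0 (v n)).
  - rewrite (uneg_nneg v n) by lra. rewrite (upos_pos v n) by lra.
    unfold Rmax; destruct Rle_dec; nra.
  - rewrite (upos_npos v n) by lra. pose proof (uneg_nonpos v n).
    unfold Rmax; destruct Rle_dec; nra.
Qed.

Lemma uneg_w v s t n : 0 < s -> 0 < t -> uneg (wv v s t) n = t * uneg v n.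
Proof.
  intros Hs Ht. unfold uneg at 1. change (wv v s t n) with (s * upos v n + t * uneg v n).
  destruct (Rlt_le_dec 0 (v n)).
  - rewrite (uneg_nneg v n) by lra. pose proof (upos_nonneg v n).
    unfold Rmin; destruct Rle_dec; nra.
  - rewrite (upos_npos v n) by lra. pose proof (uneg_nonpos v n).
    unfold Rmin; destruct Rle_dec; nra.
Qed.

Lemma Delta_sign v n : (0 <= Delta (upos v) n /\ 0 <= Delta (uneg v) n) \/ (Delta (upos v) n <= 0 /\ Delta (uneg v) n <= 0).
Proof.
  unfold Delta, upos, uneg, Rmax, Rmin. repeat destruct Rle_dec; lra.
Qed.

Lemma Delta_abs v n : Rabs (Delta (upos v) n) + Rabs (Delta (uneg v) n) = Rabs (Delta v n).
Proof.
  assert (E : Delta v n = Delta (upos v) n + Delta (uneg v) n).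
  { unfold Delta. rewrite <- (upos_plus_uneg v n), <- (upos_plus_uneg v (n+1)). ring. }
  rewrite E. destruct (Delta_sign v n) as [[H1 H2]|[H1 H2]].
  - rewrite !Rabs_right by lra. auto.
  - rewrite !Rabs_left1 by lra. lra.
Qed.


Lemma termA j x y s t : 0 < s -> (0<=x/\0<=y) \/ (x<=0/\y<=0) ->
  (s*x + t*y)^(2*j+1) * (s*x) = s^(2*j+2) * ((Rabs x + t/s*Rabs y)^(2*j+1) * Rabs x).
Proof.
  intros Hs [[H1 H2]|[H1 H2]].
  - rewrite !Rabs_right by lra.
    replace (s*x+t*y) with (s*(x+t/s*y)) by (field; lra).
    rewrite Rpow_mult_distr. replace (2*j+2)%nat with (S (2*j+1)) by lia. simpl. ring.
  - rewrite !Rabs_left1 by lra.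
    replace (s*x+t*y) with (-(s*(-x+t/s*(-y)))) by (field; lra).
    rewrite pow_odd_opp, Rpow_mult_distr. replace (2*j+2)%nat with (S (2*j+1)) by lia. simpl. ring.
Qed.

Lemma termB j x y s t : x * y = 0 -> (s*x + t*y)^(2*j+1) * (s*x) = s^(2*j+2) * x^(2*j+2).
Proof.
  intros H. destruct (Req_dec x 0) as [->|Hx].
  - rewrite pow_i by lia. ring.
  - assert (y = 0) by (apply (Rmult_eq_reg_l x); [lra|auto]). subst y.
    replace (s*x+t*0) with (s*x) by ring. rewrite Rmult_comm, tech_pow_Rmult.
    replace (S (2*j+1)) with (2*j+2)%nat by lia. apply Rpow_mult_distr.
Qed.

Definition Kf (j : nat) (a b : Z -> R) (v : Z -> R) (x : R) : R :=
  sumZ (fun n => a n * ((Rabs (Delta (upos v) n) + x * Rabs (Delta (uneg v) n))^(2*j+1) * Rabs (Delta (upos v) n))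
               + b n * (upos v n)^(2*j+2)).
Definition Bc (q : R) (c : Z -> R) (v : Z -> R) : R := sumZ (fun n => c n * rpow (upos v n) q).
Definition Cc (q r : R) (c : Z -> R) (v : Z -> R) : R := sumZ (logterm q r c (upos v)).
Definition gf (j : nat) (q r : R) (c : Z -> R) (v : Z -> R) (s : R) : R :=
  Rpower s (q - INR (2*j+2)) * (r * Bc q c v * ln s + Cc q r c v).

Lemma term1 j (a b v : Z -> R) s t n : 0 < s -> 0 < t ->
  a n * rpow (Rabs (Delta (wv v s t) n)) (INR (2*j+2) - 2) * Delta (wv v s t) n * Delta (upos (wv v s t)) n
  + b n * rpow (Rabs (wv v s t n)) (INR (2*j+2) - 2) * wv v s t n * upos (wv v s t) n
  = s^(2*j+2) * (a n * ((Rabs (Delta (upos v) n) + (t/s) * Rabs (Delta (uneg v) n))^(2*j+1) * Rabs (Delta (upos v) n))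
               + b n * (upos v n)^(2*j+2)).
Proof.
  intros Hs Ht.
  assert (E1 : Delta (wv v s t) n = s * Delta (upos v) n + t * Delta (uneg v) n) by (unfold Delta, wv; ring).
  assert (E2 : Delta (upos (wv v s t)) n = s * Delta (upos v) n) by (unfold Delta; rewrite !upos_w by auto; ring).
  rewrite upos_w by auto. rewrite E2.
  replace (a n * rpow (Rabs (Delta (wv v s t) n)) (INR (2*j+2) - 2) * Delta (wv v s t) n * (s * Delta (upos v) n))
    with (a n * ((rpow (Rabs (Delta (wv v s t) n)) (INR (2*j+2) - 2) * Delta (wv v s t) n) * (s * Delta (upos v) n))) by ring.
  replace (b n * rpow (Rabs (wv v s t n)) (INR (2*j+2) - 2) * wv v s t n * (s * upos v n))
    with (b n * ((rpow (Rabs (wv v s t n)) (INR (2*j+2) - 2) * wv v s t n) * (s * upos v n))) by ring.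
  rewrite !rpow_odd. rewrite E1. rewrite termA by (auto; apply Delta_sign).
  unfold wv. rewrite (termB j _ _ s t) by apply upos_uneg. ring.
Qed.

Lemma Rpower_q2 x q : 0 < x -> Rpower x (q - 2) * x * x = Rpower x q.
Proof.
  intro Hx. rewrite <- (Rpower_1 x) at 2 by auto. rewrite <- (Rpower_1 x) at 3 by auto.
  rewrite <- !Rpower_plus. f_equal; ring.
Qed.

Lemma term2 q r (c v : Z -> R) s t n : 0 < s -> 0 < t -> q <> 0 ->
  (if Req_EM_T (wv v s t n) 0 then 0
   else c n * rpow (Rabs (wv v s t n)) (q - 2) * wv v s t n * upos (wv v s t) n * ln (rpow (Rabs (wv v s t n)) r))
  = Rpower s q * (r * ln s * (c n * rpow (upos v n) q) + logterm q r c (upos v) n).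
Proof.
  intros Hs Ht Hq. rewrite upos_w by auto. unfold logterm.
  destruct (Rlt_le_dec 0 (v n)) as [Hv|Hv].
  - assert (W : wv v s t n = s * v n) by (unfold wv; rewrite upos_pos, uneg_nneg by lra; ring).
    rewrite upos_pos by auto. rewrite W.
    destruct (Req_EM_T (s * v n) 0) as [e|_]. { nra. }
    destruct (Req_EM_T (v n) 0) as [e|_]. { lra. }
    rewrite !Rabs_right by nra. rewrite !rpow_pos by nra.
    replace (c n * Rpower (s * v n) (q - 2) * (s * v n) * (s * v n))
      with (c n * (Rpower (s * v n) (q - 2) * (s * v n) * (s * v n))) by ring.
    rewrite Rpower_q2 by nra. rewrite !ln_Rpower. rewrite ln_mult by auto.
    rewrite <- Rpower_mult_distr by auto. ring.
  - rewrite (upos_npos v n Hv). rewrite rpow_0 by auto.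
    destruct (Req_EM_T 0 0) as [_|e]; [|lra].
    destruct (Req_EM_T (wv v s t n) 0); ring.
Qed.


Lemma decomp j p q r (a b c v : Z -> R) s t : p = INR (2*j+2) -> q <> 0 -> 0 < s -> 0 < t ->
  ex_sumZ (fun n => c n * rpow (upos v n) q) -> ex_sumZ (logterm q r c (upos v)) ->
  dI p q r a b c (wv v s t) (upos (wv v s t)) = s^(2*j+2) * (Kf j a b v (t/s) - gf j q r c v s).
Proof.
  intros -> Hq Hs Ht HB HC. unfold dI.
  rewrite (sumZ_ext _ _ (fun n => term1 j a b v s t n Hs Ht)).
  rewrite (sumZ_ext _ _ (fun n => term2 q r c v s t n Hs Ht Hq)).
  rewrite !sumZ_scal. rewrite (sumZ_plus (fun n => r * ln s * (c n * rpow (upos v n) q)) (logterm q r c (upos v))).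
  2: apply exZ_scal; auto. 2: auto.
  rewrite sumZ_scal. unfold Kf, gf, Bc, Cc.
  replace (Rpower s q) with (Rpower s (q - INR (2*j+2)) * s^(2*j+2)).
  ring.
  rewrite <- Rpower_pow by auto. rewrite <- Rpower_plus. f_equal; ring.
Qed.

Lemma Delta_neg (w : Z -> R) n : Delta (fun k => - w k) n = - Delta w n.
Proof. unfold Delta; ring. Qed.

Lemma dI_neg p q r (a b c w z : Z -> R) :
  dI p q r a b c (fun n => - w n) (fun n => - z n) = dI p q r a b c w z.
Proof.
  unfold dI. f_equal; apply sumZ_ext; intro n.
  - rewrite !Delta_neg, !Rabs_Ropp. ring.
  - rewrite !Rabs_Ropp. destruct (Req_dec_T (- w n) 0); destruct (Req_dec_T (w n) 0); try lra; ring.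
Qed.

Lemma sym_neg p q r (a b c u : Z -> R) s t : 0 < s -> 0 < t ->
  dI p q r a b c (wv u s t) (uneg (wv u s t)) =
  dI p q r a b c (wv (fun n => - u n) t s) (upos (wv (fun n => - u n) t s)).
Proof.
  intros Hs Ht.
  assert (H1 : wv (fun n => - u n) t s = fun n => - wv u s t n).
  { apply functional_extensionality; intro n. unfold wv, upos, uneg, Rmax, Rmin. cbv beta.
    destruct (Rle_dec (- u n) 0); destruct (Rle_dec (u n) 0); try lra.
    assert (u n = 0) by lra. rewrite H. ring. }
  assert (H2 : upos (wv (fun n => - u n) t s) = fun n => - uneg (wv u s t) n).
  { apply functional_extensionality; intro n. rewrite H1. unfold upos, uneg, Rmax, Rmin. cbv beta.
    destruct (Rle_dec (- wv u s t n) 0); destruct (Rle_dec (wv u s t n) 0); lra. }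
  rewrite H2, H1, dI_neg. auto.
Qed.


Lemma exp_le_mono x y : x <= y -> exp x <= exp y.
Proof. intro H; destruct (Rle_lt_or_eq_dec _ _ H); [left; apply exp_increasing; auto| subst; lra]. Qed.

Lemma pow_even_nonneg x j : 0 <= x^(2*j+2).
Proof. replace (2*j+2)%nat with (2*(j+1))%nat by lia. rewrite <- pow_even_abs. apply pow_le, Rabs_pos. Qed.

Lemma c_bound j q r (b c v : Z -> R) b0 c0 n : 1 <= r -> 0 < q -> 0 < b0 -> b0 <= b n -> c n <= c0 -> 0 < c n ->
  c n * rpow (Rabs (v n)) q <= Rabs (logterm q r c v n) + (c0 * exp q * exp (INR (2*j+2)) / b0) * (b n * (v n)^(2*j+2)).
Proof.
  intros Hr Hq Hb0 Hb Hc Hcp.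
  assert (K0 : 0 <= (c0 * exp q * exp (INR (2*j+2)) / b0) * (b n * (v n)^(2*j+2))).
  { apply Rmult_le_pos. unfold Rdiv. apply Rmult_le_pos. pose proof (exp_pos q); pose proof (exp_pos (INR (2*j+2))).
    apply Rmult_le_pos; [|lra]. apply Rmult_le_pos; lra. left; apply Rinv_0_lt_compat; lra.
    apply Rmult_le_pos; [lra| apply pow_even_nonneg]. }
  pose proof (Rabs_pos (logterm q r c v n)).
  unfold logterm in *. destruct (Req_EM_T (v n) 0) as [e|ne].
  - assert (Z0 : rpow (Rabs (v n)) q = 0) by (rewrite e, Rabs_R0; apply rpow_0; apply Rgt_not_eq; lra). rewrite Z0, Rabs_R0. lra.
  - assert (Hx : 0 < Rabs (v n)) by (apply Rabs_pos_lt; auto).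
    set (x := Rabs (v n)) in *. rewrite !rpow_pos by auto. rewrite ln_Rpower.
    assert (HP : 0 < Rpower x q) by apply exp_pos.
    destruct (Rle_or_lt 1 (Rabs (ln x))) as [L|L].
    + rewrite !Rabs_mult. rewrite (Rabs_right (c n)) by lra. rewrite (Rabs_right (Rpower x q)) by lra.
      rewrite (Rabs_right r) by lra.
      assert (1 <= r * Rabs (ln x)) by nra.
      assert (c n * Rpower x q <= c n * Rpower x q * (r * Rabs (ln x))).
      { rewrite <- (Rmult_1_r (c n * Rpower x q)) at 1. apply Rmult_le_compat_l; nra. }
      lra.
    + apply Rabs_def2 in L. destruct L as [L1 L2].
      assert (P1 : Rpower x q <= exp q).
      { unfold Rpower. apply exp_le_mono. nra. }
      assert (P2 : exp (- INR (2*j+2)) <= (v n)^(2*j+2)).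
      { replace (2*j+2)%nat with (2*(j+1))%nat by lia. rewrite <- pow_even_abs. fold x.
        rewrite <- Rpower_pow by auto. unfold Rpower. apply exp_le_mono.
        pose proof (pos_INR (2*(j+1))). nra. }
      assert (E : exp (INR (2*j+2)) * exp (- INR (2*j+2)) = 1).
      { rewrite <- exp_plus. replace (INR (2*j+2) + - INR (2*j+2)) with 0 by ring. apply exp_0. }
      assert (c n * Rpower x q <= c0 * exp q) by (apply Rmult_le_compat; lra).
      set (K := c0 * exp q * exp (INR (2 * j + 2)) / b0) in *.
      assert (EK : K * (b0 * exp (- INR (2*j+2))) = c0 * exp q).
      { unfold K. field_simplify; [|lra]. rewrite Rmult_assoc, E. field. }
      assert (K * (b0 * exp (- INR (2*j+2))) <= K * (b n * v n ^ (2 * j + 2))).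
      { apply Rmult_le_compat_l.
        { unfold K, Rdiv. pose proof (exp_pos q); pose proof (exp_pos (INR (2*j+2))).
          apply Rmult_le_pos; [|left; apply Rinv_0_lt_compat; lra].
          apply Rmult_le_pos; [apply Rmult_le_pos|]; lra. }
        apply Rmult_le_compat; try lra. left; apply exp_pos. }
      match goal with |- _ <= Rabs ?X + _ => pose proof (Rabs_pos X) end.
      lra.
Qed.


Lemma rpow_nonneg x y : 0 <= rpow x y.
Proof. unfold rpow. destruct Rle_dec; [destruct Req_EM_T; lra| left; apply exp_pos]. Qed.

Lemma sums_of_D j q r (a b c v : Z -> R) b0 c0 :
  (forall n, 0 < a n) -> (forall n, 0 < b n) -> (forall n, 0 < c n) -> 0 < b0 ->
  (forall n, b0 <= b n) -> (forall n, c n <= c0) -> 1 <= r -> 0 < q ->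
  inD (INR (2*j+2)) q r a b c v ->
  ex_sumZ (fun n => a n * (Delta v n)^(2*j+2)) /\ ex_sumZ (fun n => b n * (v n)^(2*j+2)) /\
  ex_sumZ (fun n => c n * rpow (Rabs (v n)) q) /\ ex_sumZ (fun n => Rabs (logterm q r c v n)).
Proof.
  intros Ha Hb Hc Hb0 Hbb Hcc Hr Hq [HE HL].
  unfold inE in HE.
  assert (A1 : ex_sumZ (fun n => a n * (Delta v n)^(2*j+2))).
  { apply (exZ_le _ _ ) with (2 := HE). intro n. rewrite !rpow_even.
    pose proof (pow_even_nonneg (Delta v n) j); pose proof (pow_even_nonneg (v n) j);
    pose proof (Ha n); pose proof (Hb n).
    rewrite Rabs_right by nra. nra. }
  assert (A2 : ex_sumZ (fun n => b n * (v n)^(2*j+2))).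
  { apply (exZ_le _ _ ) with (2 := HE). intro n. rewrite !rpow_even.
    pose proof (pow_even_nonneg (Delta v n) j); pose proof (pow_even_nonneg (v n) j);
    pose proof (Ha n); pose proof (Hb n).
    rewrite Rabs_right by nra. nra. }
  split; [auto| split; [auto| split; [|auto]]].
  apply (exZ_le _ (fun n => Rabs (logterm q r c v n) + (c0 * exp q * exp (INR (2*j+2)) / b0) * (b n * (v n)^(2*j+2)))).
  - intro n. pose proof (rpow_nonneg (Rabs (v n)) q). pose proof (Hc n).
    rewrite Rabs_right by nra. apply c_bound; auto.
  - apply exZ_plus; auto. apply exZ_scal; auto.
Qed.

Lemma exB q (c v : Z -> R) : (forall n, 0 < c n) -> 0 < q -> ex_sumZ (fun n => c n * rpow (Rabs (v n)) q) ->
  ex_sumZ (fun n => c n * rpow (upos v n) q).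
Proof.
  intros Hc Hq H. apply (exZ_le _ _) with (2 := H). intro n.
  pose proof (Hc n). pose proof (rpow_nonneg (upos v n) q).
  rewrite Rabs_right by nra.
  destruct (Rlt_le_dec 0 (v n)).
  - rewrite upos_pos, Rabs_right by lra. lra.
  - rewrite upos_npos by lra. rewrite rpow_0 by lra. pose proof (rpow_nonneg (Rabs (v n)) q). nra.
Qed.

Lemma exC q r (c v : Z -> R) : ex_sumZ (fun n => Rabs (logterm q r c v n)) -> ex_sumZ (logterm q r c (upos v)).
Proof.
  intros H. apply (exZ_le _ _) with (2 := H). intro n. unfold logterm.
  destruct (Rlt_le_dec 0 (v n)).
  - rewrite upos_pos by lra. lra.
  - rewrite upos_npos by lra. destruct (Req_EM_T 0 0); [|lra]. rewrite Rabs_R0. apply Rabs_pos.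
Qed.


Lemma pow_diff (A B M : R) n : Rabs A <= M -> Rabs B <= M ->
  Rabs (A^(S n) - B^(S n)) <= INR (S n) * M^n * Rabs (A - B).
Proof.
  intros HA HB. assert (HM : 0 <= M) by (pose proof (Rabs_pos A); lra).
  induction n.
  - simpl. rewrite !Rmult_1_r. lra.
  - replace (A ^ S (S n) - B ^ S (S n)) with (A * (A^(S n) - B^(S n)) + B^(S n) * (A - B)) by (simpl; ring).
    eapply Rle_trans. apply Rabs_triang. rewrite !Rabs_mult.
    assert (Rabs A * Rabs (A ^ S n - B ^ S n) <= M * (INR (S n) * M ^ n * Rabs (A - B))).
    { apply Rmult_le_compat; auto using Rabs_pos. }
    assert (Rabs (B ^ S n) * Rabs (A - B) <= M^(S n) * Rabs (A - B)).
    { apply Rmult_le_compat_r. apply Rabs_pos. rewrite <- RPow_abs. apply pow_incr. split; auto using Rabs_pos. }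
    rewrite S_INR. simpl pow in *. nra.
Qed.

Lemma kf_bound_pt (al be x : R) m : 0 <= al -> 0 <= be ->
  Rabs ((al + x*be)^m * al) <= (1 + Rabs x)^m * (al+be)^(S m).
Proof.
  intros H1 H2. rewrite Rabs_mult, <- RPow_abs, (Rabs_right al) by lra.
  assert (Rabs (al + x*be) <= (1 + Rabs x) * (al + be)).
  { eapply Rle_trans. apply Rabs_triang. rewrite Rabs_mult, (Rabs_right al), (Rabs_right be) by lra.
    pose proof (Rabs_pos x). nra. }
  assert (Rabs (al + x * be) ^ m <= ((1 + Rabs x) * (al + be))^m).
  { apply pow_incr. split; auto using Rabs_pos. }
  rewrite Rpow_mult_distr in H0. simpl.
  assert (0 <= (1 + Rabs x) ^ m) by (apply pow_le; pose proof (Rabs_pos x); lra).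
  assert (0 <= (al + be) ^ m) by (apply pow_le; lra).
  assert (0 <= Rabs (al + x * be) ^ m) by (apply pow_le; apply Rabs_pos).
  nra.
Qed.

Lemma kf_lip_pt (al be x y X : R) j : 0 <= al -> 0 <= be -> Rabs x <= X -> Rabs y <= X ->
  Rabs ((al + x*be)^(2*j+1) * al - (al + y*be)^(2*j+1) * al)
  <= INR (2*j+1) * (1+X)^(2*j) * (al+be)^(2*j+2) * Rabs (x - y).
Proof.
  intros H1 H2 Hx Hy.
  assert (HX : 0 <= X) by (pose proof (Rabs_pos x); lra).
  assert (B : forall z, Rabs z <= X -> Rabs (al + z*be) <= (1+X)*(al+be)).
  { intros z Hz. eapply Rle_trans. apply Rabs_triang. rewrite Rabs_mult, (Rabs_right al), (Rabs_right be) by lra.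
    pose proof (Rabs_pos z). nra. }
  replace ((al + x*be)^(2*j+1) * al - (al + y*be)^(2*j+1) * al)
    with (((al + x*be)^(S (2*j)) - (al + y*be)^(S (2*j))) * al) by (replace (2*j+1)%nat with (S (2*j)) by lia; ring).
  rewrite Rabs_mult, (Rabs_right al) by lra.
  pose proof (pow_diff (al + x*be) (al + y*be) ((1+X)*(al+be)) (2*j) (B x Hx) (B y Hy)) as P.
  replace (al + x * be - (al + y * be)) with ((x - y) * be) in P by ring.
  rewrite Rabs_mult, (Rabs_right be) in P by lra.
  rewrite Rpow_mult_distr in P. replace (INR (S (2*j))) with (INR (2*j+1)) in P by (f_equal; lia).
  replace ((al+be)^(2*j+2)) with ((al+be)^(2*j) * (al+be)^2) by (rewrite <- pow_add; f_equal; lia).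
  assert (0 <= INR (2*j+1) * (1+X)^(2*j) * (al+be)^(2*j) * Rabs (x - y)).
  { repeat apply Rmult_le_pos; try apply pow_le; try lra; try apply pos_INR; apply Rabs_pos. }
  assert (be * al <= (al+be)^2) by (simpl; nra).
  apply Rle_trans with (INR (2 * j + 1) * ((1 + X) ^ (2 * j) * (al + be) ^ (2 * j)) * (Rabs (x - y) * be) * al).
  apply Rmult_le_compat_r; lra.
  replace (INR (2 * j + 1) * ((1 + X) ^ (2 * j) * (al + be) ^ (2 * j)) * (Rabs (x - y) * be) * al)
    with ((INR (2*j+1) * (1+X)^(2*j) * (al+be)^(2*j) * Rabs (x - y)) * (be * al)) by ring.
  replace (INR (2 * j + 1) * (1 + X) ^ (2 * j) * ((al + be) ^ (2 * j) * (al + be) ^ 2) * Rabs (x - y))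
    with ((INR (2*j+1) * (1+X)^(2*j) * (al+be)^(2*j) * Rabs (x - y)) * (al+be)^2) by ring.
  apply Rmult_le_compat_l; auto.
Qed.


Lemma absD_pow v n j : (Rabs (Delta (upos v) n) + Rabs (Delta (uneg v) n))^(2*j+2) = (Delta v n)^(2*j+2).
Proof. rewrite Delta_abs. replace (2*j+2)%nat with (2*(j+1))%nat by lia. apply pow_even_abs. Qed.

Lemma upos_pow_le v n j : (upos v n)^(2*j+2) <= (v n)^(2*j+2).
Proof. destruct (Rlt_le_dec 0 (v n)).
  - rewrite upos_pos by lra. lra.
  - rewrite upos_npos by lra. rewrite pow_i by lia. apply pow_even_nonneg. Qed.

Definition kf (j : nat) (a b v : Z -> R) (x : R) (n : Z) : R :=
  a n * ((Rabs (Delta (upos v) n) + x * Rabs (Delta (uneg v) n))^(2*j+1) * Rabs (Delta (upos v) n))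
  + b n * (upos v n)^(2*j+2).

Lemma Kf_eq j a b v x : Kf j a b v x = sumZ (kf j a b v x).
Proof. reflexivity. Qed.

Lemma ex_kf j (a b v : Z -> R) x : (forall n, 0 < a n) -> (forall n, 0 < b n) ->
  ex_sumZ (fun n => a n * (Delta v n)^(2*j+2)) -> ex_sumZ (fun n => b n * (v n)^(2*j+2)) ->
  ex_sumZ (kf j a b v x).
Proof.
  intros Ha Hb HA HB.
  apply (exZ_le _ (fun n => (1 + Rabs x)^(2*j+1) * (a n * (Delta v n)^(2*j+2)) + b n * (v n)^(2*j+2))).
  2: apply exZ_plus; auto; apply exZ_scal; auto.
  intro n. unfold kf. eapply Rle_trans. apply Rabs_triang.
  pose proof (Ha n); pose proof (Hb n).
  rewrite !Rabs_mult, (Rabs_right (a n)), (Rabs_right (b n)) by lra.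
  rewrite <- (RPow_abs (upos v n)), (Rabs_right (upos v n)) by (apply Rle_ge, upos_nonneg).
  pose proof (kf_bound_pt (Rabs (Delta (upos v) n)) (Rabs (Delta (uneg v) n)) x (2*j+1) (Rabs_pos _) (Rabs_pos _)) as K.
  replace (S (2*j+1)) with (2*j+2)%nat in K by lia. rewrite absD_pow in K.
  rewrite Rabs_mult in K.
  pose proof (upos_pow_le v n j).
  assert (a n * (Rabs ((Rabs (Delta (upos v) n) + x * Rabs (Delta (uneg v) n)) ^ (2 * j + 1)) * Rabs (Rabs (Delta (upos v) n)))
    <= a n * ((1 + Rabs x) ^ (2 * j + 1) * Delta v n ^ (2 * j + 2))) by (apply Rmult_le_compat_l; lra).
  nra.
Qed.

Lemma Kf_mono j (a b v : Z -> R) x y : (forall n, 0 < a n) -> (forall n, 0 < b n) ->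
  ex_sumZ (fun n => a n * (Delta v n)^(2*j+2)) -> ex_sumZ (fun n => b n * (v n)^(2*j+2)) ->
  0 <= x -> x <= y -> Kf j a b v x <= Kf j a b v y.
Proof.
  intros Ha Hb HA HB Hx Hxy. rewrite !Kf_eq. apply sumZ_le; try apply ex_kf; auto.
  intro n. unfold kf. apply Rplus_le_compat_r. apply Rmult_le_compat_l. left; auto.
  apply Rmult_le_compat_r. apply Rabs_pos. apply pow_incr.
  pose proof (Rabs_pos (Delta (upos v) n)); pose proof (Rabs_pos (Delta (uneg v) n)). nra.
Qed.

Lemma Kf_lip j (a b v : Z -> R) x y X : (forall n, 0 < a n) -> (forall n, 0 < b n) ->
  ex_sumZ (fun n => a n * (Delta v n)^(2*j+2)) -> ex_sumZ (fun n => b n * (v n)^(2*j+2)) ->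
  Rabs x <= X -> Rabs y <= X ->
  Rabs (Kf j a b v x - Kf j a b v y) <=
  (INR (2*j+1) * (1+X)^(2*j) * Rabs (x - y)) * sumZ (fun n => a n * (Delta v n)^(2*j+2)).
Proof.
  intros Ha Hb HA HB Hx Hy. rewrite !Kf_eq. rewrite <- sumZ_minus by (apply ex_kf; auto).
  rewrite <- sumZ_scal. apply sumZ_abs. apply exZ_scal; auto.
  intro n. unfold kf.
  replace (a n * ((Rabs (Delta (upos v) n) + x * Rabs (Delta (uneg v) n)) ^ (2 * j + 1) * Rabs (Delta (upos v) n)) +
   b n * upos v n ^ (2 * j + 2) -
   (a n * ((Rabs (Delta (upos v) n) + y * Rabs (Delta (uneg v) n)) ^ (2 * j + 1) * Rabs (Delta (upos v) n)) +
    b n * upos v n ^ (2 * j + 2)))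
   with (a n * ((Rabs (Delta (upos v) n) + x * Rabs (Delta (uneg v) n)) ^ (2 * j + 1) * Rabs (Delta (upos v) n)
      - (Rabs (Delta (upos v) n) + y * Rabs (Delta (uneg v) n)) ^ (2 * j + 1) * Rabs (Delta (upos v) n))) by ring.
  pose proof (Ha n). rewrite Rabs_mult, (Rabs_right (a n)) by lra.
  pose proof (kf_lip_pt (Rabs (Delta (upos v) n)) (Rabs (Delta (uneg v) n)) x y X j (Rabs_pos _) (Rabs_pos _) Hx Hy) as K.
  rewrite absD_pow in K.
  replace (INR (2 * j + 1) * (1 + X) ^ (2 * j) * Rabs (x - y) * (a n * Delta v n ^ (2 * j + 2)))
    with (a n * (INR (2 * j + 1) * (1 + X) ^ (2 * j) * Delta v n ^ (2 * j + 2) * Rabs (x - y))) by ring.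
  apply Rmult_le_compat_l; lra.
Qed.

Lemma nonzero_point (w : Z -> R) : w <> zero_seq -> exists n, w n <> 0.
Proof.
  intros H. apply NNPP. intro H'. apply H. apply functional_extensionality. intro n.
  unfold zero_seq. apply NNPP. intro H2. apply H'. exists n. auto.
Qed.

Lemma Kf_pos j (a b v : Z -> R) x : (forall n, 0 < a n) -> (forall n, 0 < b n) ->
  ex_sumZ (fun n => a n * (Delta v n)^(2*j+2)) -> ex_sumZ (fun n => b n * (v n)^(2*j+2)) ->
  upos v <> zero_seq -> 0 <= x -> 0 < Kf j a b v x.
Proof.
  intros Ha Hb HA HB Hv Hx. destruct (nonzero_point _ Hv) as [n0 Hn0].
  assert (T : forall n, 0 <= kf j a b v x n).
  { intro n. unfold kf. pose proof (Ha n); pose proof (Hb n).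
    pose proof (Rabs_pos (Delta (upos v) n)); pose proof (Rabs_pos (Delta (uneg v) n)).
    assert (0 <= (Rabs (Delta (upos v) n) + x * Rabs (Delta (uneg v) n)) ^ (2 * j + 1)) by (apply pow_le; nra).
    assert (0 <= upos v n ^ (2*j+2)) by (apply pow_le, upos_nonneg).
    assert (0 <= a n * ((Rabs (Delta (upos v) n) + x * Rabs (Delta (uneg v) n)) ^ (2 * j + 1) * Rabs (Delta (upos v) n))).
    { apply Rmult_le_pos; [lra| apply Rmult_le_pos; lra]. }
    nra. }
  rewrite Kf_eq. eapply Rlt_le_trans. 2: apply (sumZ_term _ n0 T); apply ex_kf; auto.
  unfold kf. pose proof (upos_nonneg v n0).
  assert (0 < upos v n0 ^ (2*j+2)) by (apply pow_lt; lra).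
  pose proof (T n0). unfold kf in H1. pose proof (Hb n0).
  assert (0 <= a n0 * ((Rabs (Delta (upos v) n0) + x * Rabs (Delta (uneg v) n0)) ^ (2 * j + 1) * Rabs (Delta (upos v) n0))).
  { apply Rmult_le_pos. pose proof (Ha n0); lra. apply Rmult_le_pos; [apply pow_le|apply Rabs_pos].
    pose proof (Rabs_pos (Delta (upos v) n0)); pose proof (Rabs_pos (Delta (uneg v) n0)); nra. }
  nra.
Qed.


Lemma sumZ_nonneg (f : Z -> R) : ex_sumZ f -> (forall n, 0 <= f n) -> 0 <= sumZ f.
Proof.
  intros Hf H. pose proof (sumZ_term f 0%Z H Hf). pose proof (H 0%Z). lra.
Qed.

Lemma Kf_cont j (a b v : Z -> R) x0 : (forall n, 0 < a n) -> (forall n, 0 < b n) ->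
  ex_sumZ (fun n => a n * (Delta v n)^(2*j+2)) -> ex_sumZ (fun n => b n * (v n)^(2*j+2)) ->
  continuity_pt (Kf j a b v) x0.
Proof.
  intros Ha Hb HA HB eps Heps.
  set (X := Rabs x0 + 1).
  set (SA := sumZ (fun n => a n * (Delta v n)^(2*j+2))).
  assert (HSA : 0 <= SA).
  { apply sumZ_nonneg; auto. intro n. pose proof (Ha n). pose proof (pow_even_nonneg (Delta v n) j). nra. }
  set (L := INR (2*j+1) * (1+X)^(2*j) * SA).
  assert (HL : 0 <= L).
  { unfold L. apply Rmult_le_pos; auto. apply Rmult_le_pos. apply pos_INR. apply pow_le. unfold X; pose proof (Rabs_pos x0); lra. }
  exists (Rmin 1 (eps / (L + 1))). split.
  { apply Rmin_pos. lra. apply Rdiv_lt_0_compat; lra. }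
  intros x [_ Hx]. change (R_dist x x0 < Rmin 1 (eps/(L+1))) in Hx.
  change (R_dist (Kf j a b v x) (Kf j a b v x0) < eps). unfold R_dist in *.
  assert (H1 : Rabs (x - x0) < 1) by (eapply Rlt_le_trans; [apply Hx| apply Rmin_l]).
  assert (H2 : Rabs (x - x0) < eps / (L+1)) by (eapply Rlt_le_trans; [apply Hx| apply Rmin_r]).
  assert (Bx : Rabs x <= X).
  { unfold X. replace x with ((x - x0) + x0) by ring. eapply Rle_trans. apply Rabs_triang. lra. }
  assert (Bx0 : Rabs x0 <= X) by (unfold X; lra).
  pose proof (Kf_lip j a b v x x0 X Ha Hb HA HB Bx Bx0) as K.
  fold SA in K.
  replace (INR (2 * j + 1) * (1 + X) ^ (2 * j) * Rabs (x - x0) * SA) with (L * Rabs (x - x0)) in K by (unfold L; ring).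
  assert (L * Rabs (x - x0) <= L * (eps / (L+1))) by (apply Rmult_le_compat_l; lra).
  assert (L * (eps / (L+1)) < eps).
  { assert (E : L * (eps/(L+1)) = eps - eps/(L+1)) by (field; lra).
    assert (0 < eps/(L+1)) by (apply Rdiv_lt_0_compat; lra). lra. }
  lra.
Qed.

Definition gg (e R0 C s : R) : R := Rpower s e * (R0 * ln s + C).

Lemma gg_pos e R0 C s : 0 < R0 -> 0 < s -> 0 < gg e R0 C s -> exp (- C / R0) < s.
Proof.
  intros HR Hs H. unfold gg in H. assert (0 < Rpower s e) by apply exp_pos.
  assert (0 < R0 * ln s + C).
  { destruct (Rlt_le_dec 0 (R0 * ln s + C)); auto. nra. }
  rewrite <- (exp_ln s) by auto. apply exp_increasing.
  apply (Rmult_lt_reg_l R0); auto. unfold Rdiv. field_simplify; lra.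
Qed.

Lemma gg_star e R0 C : 0 < R0 -> gg e R0 C (exp (- C / R0)) = 0.
Proof. intros HR. unfold gg. rewrite ln_exp. field_simplify; lra. Qed.

Lemma gg_strict e R0 C s1 s2 : 0 < e -> 0 < R0 -> exp (- C / R0) <= s1 -> s1 < s2 -> gg e R0 C s1 < gg e R0 C s2.
Proof.
  intros He HR H1 H12. unfold gg.
  assert (Hs1 : 0 < s1) by (pose proof (exp_pos (- C / R0)); lra).
  assert (L1 : - C / R0 <= ln s1).
  { rewrite <- (ln_exp (- C / R0)). destruct (Rle_lt_or_eq_dec _ _ H1). left; apply ln_increasing; auto; apply exp_pos. rewrite e0; lra. }
  assert (L12 : ln s1 < ln s2) by (apply ln_increasing; auto).
  assert (P0 : 0 <= R0 * ln s1 + C).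
  { apply (Rmult_le_compat_l R0) in L1; [|lra]. unfold Rdiv in L1. field_simplify in L1; lra. }
  assert (P1 : R0 * ln s1 + C < R0 * ln s2 + C) by nra.
  assert (Q : Rpower s1 e < Rpower s2 e) by (apply Rlt_Rpower_l; auto).
  assert (0 < Rpower s1 e) by apply exp_pos.
  nra.
Qed.

Lemma gg_large e R0 C M : 0 < e -> 0 < R0 -> exists S, 0 < S /\ forall s, S <= s -> M < gg e R0 C s.
Proof.
  intros He HR. exists (exp ((Rabs M + Rabs C + 1) / R0)). split. apply exp_pos.
  intros s Hs. unfold gg.
  assert (H0 : 0 <= (Rabs M + Rabs C + 1) / R0).
  { apply Rmult_le_pos. pose proof (Rabs_pos M); pose proof (Rabs_pos C); lra. left; apply Rinv_0_lt_compat; auto. }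
  assert (Hs0 : 0 < s) by (pose proof (exp_pos ((Rabs M + Rabs C + 1) / R0)); lra).
  assert (L : (Rabs M + Rabs C + 1) / R0 <= ln s).
  { rewrite <- (ln_exp ((Rabs M + Rabs C + 1) / R0)). destruct (Rle_lt_or_eq_dec _ _ Hs). left; apply ln_increasing; auto; apply exp_pos. rewrite e0; lra. }
  assert (R0 * ln s >= Rabs M + Rabs C + 1).
  { apply (Rmult_le_compat_l R0) in L; [|lra]. unfold Rdiv in L. field_simplify in L; lra. }
  assert (1 <= Rpower s e).
  { unfold Rpower. rewrite <- exp_0. apply exp_le_mono. apply Rmult_le_pos; lra. }
  pose proof (Rle_abs M); pose proof (Rle_abs (-C)) as HC. rewrite Rabs_Ropp in HC.
  assert (Q : Rabs M + 1 <= R0 * ln s + C) by lra. pose proof (Rabs_pos M).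
  assert (1 * (R0 * ln s + C) <= Rpower s e * (R0 * ln s + C)) by (apply Rmult_le_compat_r; lra).
  lra.
Qed.

Lemma gg_cont e R0 C s : 0 < s -> continuous (gg e R0 C) s.
Proof.
  intros Hs. apply (ex_derive_continuous (K:=R_AbsRing) (V:=R_NormedModule) (gg e R0 C) s). unfold gg, Rpower. auto_derive. lra.
Qed.

Lemma phi_cont j (a b v : Z -> R) e R0 C t s : 0 < s -> (forall n, 0 < a n) -> (forall n, 0 < b n) ->
  ex_sumZ (fun n => a n * (Delta v n)^(2*j+2)) -> ex_sumZ (fun n => b n * (v n)^(2*j+2)) ->
  continuity_pt (fun s => gg e R0 C s - Kf j a b v (t / s)) s.
Proof.
  intros Hs Ha Hb HA HB. apply continuity_pt_filterlim.
  apply (continuous_minus (gg e R0 C) (fun s => Kf j a b v (t / s))).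
  apply gg_cont; auto.
  apply (continuous_comp (fun s => t / s) (Kf j a b v)).
  apply (ex_derive_continuous (K:=R_AbsRing) (V:=R_NormedModule) (fun s => t / s) s). auto_derive. lra.
  apply continuity_pt_filterlim. apply Kf_cont; auto.
Qed.


Definition Kgood (K : R -> R) (e R0 C : R) : Prop :=
  (forall x y, 0 <= x -> x <= y -> K x <= K y) /\
  (forall x, 0 <= x -> 0 < K x) /\
  (forall t s, 0 < s -> continuity_pt (fun s => gg e R0 C s - K (t / s)) s).

Lemma gg_le_inv e R0 C s1 s2 : 0 < e -> 0 < R0 -> exp (- C / R0) <= s1 -> exp (- C / R0) <= s2 ->
  gg e R0 C s1 <= gg e R0 C s2 -> s1 <= s2.
Proof.
  intros He HR H1 H2 H. destruct (Rle_lt_dec s1 s2); auto.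
  pose proof (gg_strict e R0 C s2 s1 He HR H2 r). lra.
Qed.

Lemma sol_star K e R0 C s t : 0 < R0 -> Kgood K e R0 C -> 0 < s -> 0 < t -> gg e R0 C s = K (t / s) ->
  exp (- C / R0) < s.
Proof.
  intros HR [Hm [Hp Hc]] Hs Ht E. apply (gg_pos e); auto. rewrite E. apply Hp.
  left; apply Rdiv_lt_0_compat; auto.
Qed.

Lemma sol_exists K e R0 C t : 0 < e -> 0 < R0 -> Kgood K e R0 C -> 0 < t ->
  exists s, 0 < s /\ gg e R0 C s = K (t / s).
Proof.
  intros He HR [Hm [Hp Hc]] Ht.
  set (ss := exp (- C / R0)).
  assert (Hss : 0 < ss) by apply exp_pos.
  destruct (gg_large e R0 C (K (t / ss)) He HR) as [S [HS HS2]].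
  set (y := Rmax S (ss + 1)).
  assert (Hy : ss + 1 <= y) by apply Rmax_r.
  assert (HyS : S <= y) by apply Rmax_l.
  assert (f1 : gg e R0 C ss - K (t / ss) < 0).
  { unfold ss. rewrite gg_star by auto. fold ss. pose proof (Hp (t / ss)). 
    assert (0 <= t / ss) by (left; apply Rdiv_lt_0_compat; auto). specialize (H H0). lra. }
  assert (f2 : 0 < gg e R0 C y - K (t / y)).
  { pose proof (HS2 y HyS).
    assert (K (t / y) <= K (t / ss)).
    { apply Hm. left; apply Rdiv_lt_0_compat; lra.
      unfold Rdiv. apply Rmult_le_compat_l. lra. apply Rinv_le_contravar; lra. }
    lra. }
  destruct (IVT_interv (fun s => gg e R0 C s - K (t / s)) ss y) as [z [Hz1 Hz2]].
  - intros a0 Ha. apply Hc. lra.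
  - lra.
  - auto.
  - auto.
  - exists z. split. lra. lra.
Qed.

Lemma sol_mono K e R0 C s1 s2 t1 t2 : 0 < e -> 0 < R0 -> Kgood K e R0 C -> 0 < s1 -> 0 < s2 -> 0 < t1 -> t1 <= t2 ->
  gg e R0 C s1 = K (t1 / s1) -> gg e R0 C s2 = K (t2 / s2) -> s1 <= s2.
Proof.
  intros He HR HK Hs1 Hs2 Ht1 Ht12 E1 E2.
  pose proof (sol_star K e R0 C s1 t1 HR HK Hs1 Ht1 E1).
  pose proof (sol_star K e R0 C s2 t2 HR HK Hs2 ltac:(lra) E2).
  destruct (Rle_lt_dec s1 s2); auto.
  destruct HK as [Hm _].
  assert (K (t1 / s1) <= K (t2 / s2)).
  { apply Hm. left; apply Rdiv_lt_0_compat; auto.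
    unfold Rdiv. apply Rmult_le_compat; try lra. left; apply Rinv_0_lt_compat; lra.
    apply Rinv_le_contravar; lra. }
  pose proof (gg_strict e R0 C s2 s1 He HR ltac:(lra) r). lra.
Qed.

Lemma sol_upper K e R0 C : 0 < e -> 0 < R0 -> Kgood K e R0 C -> exists S, 0 < S /\
  forall s t, 0 < s -> 0 < t -> gg e R0 C s = K (t / s) -> s <= Rmax t S.
Proof.
  intros He HR HK. destruct (gg_large e R0 C (K 1) He HR) as [S [HS HS2]].
  exists S. split; auto. intros s t Hs Ht E.
  destruct (Rle_lt_dec s t). { eapply Rle_trans. apply r. apply Rmax_l. }
  destruct (Rle_lt_dec s S). { eapply Rle_trans. apply r0. apply Rmax_r. }
  exfalso. pose proof (HS2 s ltac:(lra)). destruct HK as [Hm _].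
  assert (K (t / s) <= K 1).
  { apply Hm. left; apply Rdiv_lt_0_compat; auto. apply (Rmult_le_reg_r s); auto. unfold Rdiv. rewrite Rmult_assoc, Rinv_l; lra. }
  lra.
Qed.


Lemma sol_uniq K1 K2 e R1 C1 R2 C2 s t s' t' : 0<e -> 0<R1 -> 0<R2 -> Kgood K1 e R1 C1 -> Kgood K2 e R2 C2 ->
  0 < s -> 0 < t -> 0 < s' -> 0 < t' ->
  gg e R1 C1 s = K1 (t/s) -> gg e R2 C2 t = K2 (s/t) ->
  gg e R1 C1 s' = K1 (t'/s') -> gg e R2 C2 t' = K2 (s'/t') -> s = s' /\ t = t'.
Proof.
  intros He H1 H2 HK1 HK2 Hs Ht Hs' Ht' E1 E2 E1' E2'.
  pose proof (sol_star K1 e R1 C1 s t H1 HK1 Hs Ht E1) as S1.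
  pose proof (sol_star K1 e R1 C1 s' t' H1 HK1 Hs' Ht' E1') as S1'.
  pose proof (sol_star K2 e R2 C2 t s H2 HK2 Ht Hs E2) as S2.
  pose proof (sol_star K2 e R2 C2 t' s' H2 HK2 Ht' Hs' E2') as S2'.
  destruct HK1 as [M1 _]. destruct HK2 as [M2 _].
  assert (key : forall s t s' t', 0 < s -> 0 < t -> 0 < s' -> 0 < t' ->
    exp (- C1 / R1) < s -> exp (- C1 / R1) < s' -> exp (- C2 / R2) < t -> exp (- C2 / R2) < t' ->
    gg e R1 C1 s = K1 (t/s) -> gg e R2 C2 t = K2 (s/t) ->
    gg e R1 C1 s' = K1 (t'/s') -> gg e R2 C2 t' = K2 (s'/t') -> t/s <= t'/s' -> s = s' /\ t = t').
  { clear - He H1 H2 M1 M2. intros s t s' t' Hs Ht Hs' Ht' S1 S1' S2 S2' E1 E2 E1' E2' Hx.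
    assert (A : s <= s').
    { apply (gg_le_inv e R1 C1); try lra. rewrite E1, E1'. apply M1; auto.
      left; apply Rdiv_lt_0_compat; auto. }
    assert (B : t' <= t).
    { apply (gg_le_inv e R2 C2); try lra. rewrite E2, E2'. apply M2; auto.
      left; apply Rdiv_lt_0_compat; auto.
      apply (Rmult_le_reg_r (t/s * (t'/s'))). apply Rmult_lt_0_compat; apply Rdiv_lt_0_compat; auto.
      replace (s' / t' * (t / s * (t' / s'))) with (t/s) by (field; lra).
      replace (s / t * (t / s * (t' / s'))) with (t'/s') by (field; lra). auto. }
    assert (Hx' : t'/s' <= t/s).
    { unfold Rdiv. apply Rmult_le_compat; try lra. left; apply Rinv_0_lt_compat; lra.
      apply Rinv_le_contravar; lra. }
    assert (Ex : t/s = t'/s') by lra.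
    assert (Es : s = s').
    { apply Rle_antisym; auto. apply (gg_le_inv e R1 C1); try lra. rewrite E1, E1', Ex. lra. }
    subst s'. split; auto. apply (Rmult_eq_reg_r (/s)). exact Ex. apply Rinv_neq_0_compat; lra. }
  destruct (Rle_lt_dec (t/s) (t'/s')).
  - apply key; auto.
  - destruct (key s' t' s t); auto; lra.
Qed.

Lemma abstract_main K1 K2 e R1 C1 R2 C2 : 0<e -> 0<R1 -> 0<R2 -> Kgood K1 e R1 C1 -> Kgood K2 e R2 C2 ->
  exists s0 t0, 0<s0 /\ 0<t0 /\ gg e R1 C1 s0 = K1 (t0/s0) /\ gg e R2 C2 t0 = K2 (s0/t0) /\
  forall s t, 0<s -> 0<t -> gg e R1 C1 s = K1 (t/s) -> gg e R2 C2 t = K2 (s/t) -> s = s0 /\ t = t0.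
Proof.
  intros He H1 H2 HK1 HK2.
  assert (ex1 : forall t, exists s, 0 < t -> 0 < s /\ gg e R1 C1 s = K1 (t/s)).
  { intro t. destruct (Rlt_le_dec 0 t).
    - destruct (sol_exists K1 e R1 C1 t He H1 HK1 r) as [s Hs]. exists s; auto.
    - exists 0. intro; lra. }
  assert (ex2 : forall t, exists s, 0 < t -> 0 < s /\ gg e R2 C2 s = K2 (t/s)).
  { intro t. destruct (Rlt_le_dec 0 t).
    - destruct (sol_exists K2 e R2 C2 t He H2 HK2 r) as [s Hs]. exists s; auto.
    - exists 0. intro; lra. }
  set (sg := fun t => proj1_sig (constructive_indefinite_description _ (ex1 t))).
  set (tu := fun t => proj1_sig (constructive_indefinite_description _ (ex2 t))).
  assert (Psg : forall t, 0 < t -> 0 < sg t /\ gg e R1 C1 (sg t) = K1 (t / sg t)).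
  { intros t Ht. unfold sg. destruct (constructive_indefinite_description _ (ex1 t)) as [x Hx]. simpl. auto. }
  assert (Ptu : forall t, 0 < t -> 0 < tu t /\ gg e R2 C2 (tu t) = K2 (t / tu t)).
  { intros t Ht. unfold tu. destruct (constructive_indefinite_description _ (ex2 t)) as [x Hx]. simpl. auto. }
  clearbody sg tu.
  destruct (sol_upper K1 e R1 C1 He H1 HK1) as [S1 [HS1 US1]].
  destruct (sol_upper K2 e R2 C2 He H2 HK2) as [S2 [HS2 US2]].
  set (a := exp (- C2 / R2)).
  assert (Ha : 0 < a) by apply exp_pos.
  set (b := Rmax a (Rmax S1 S2)).
  assert (Hab : a <= b) by apply Rmax_l.
  assert (HbS1 : S1 <= b) by (unfold b; eapply Rle_trans; [apply Rmax_l| apply Rmax_r]).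
  assert (HbS2 : S2 <= b) by (unfold b; eapply Rle_trans; [apply Rmax_r| apply Rmax_r]).
  set (T := fun t => tu (sg t)).
  assert (Tlow : forall t, 0 < t -> a < T t).
  { intros t Ht. unfold T. destruct (Psg t Ht) as [P1 P2]. destruct (Ptu _ P1) as [Q1 Q2].
    apply (sol_star K2 e R2 C2 _ (sg t)); auto. }
  assert (Tup : forall t, 0 < t -> t <= b -> T t <= b).
  { intros t Ht Htb. unfold T. destruct (Psg t Ht) as [P1 P2]. destruct (Ptu _ P1) as [Q1 Q2].
    pose proof (US1 _ _ P1 Ht P2). pose proof (US2 _ _ Q1 P1 Q2).
    assert (sg t <= b). { eapply Rle_trans. apply H. apply Rmax_lub; auto. }
    eapply Rle_trans. apply H0. apply Rmax_lub; auto. }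
  assert (Tmono : forall t1 t2, 0 < t1 -> t1 <= t2 -> T t1 <= T t2).
  { intros t1 t2 Ht1 Ht12. unfold T.
    destruct (Psg t1 Ht1) as [P1 P2]. destruct (Psg t2 ltac:(lra)) as [P1' P2'].
    assert (sg t1 <= sg t2) by (apply (sol_mono K1 e R1 C1 _ _ t1 t2); auto).
    destruct (Ptu _ P1) as [Q1 Q2]. destruct (Ptu _ P1') as [Q1' Q2'].
    apply (sol_mono K2 e R2 C2 _ _ (sg t1) (sg t2)); auto. }
  set (Eset := fun t => a <= t <= b /\ t <= T t).
  assert (Eb : bound Eset). { exists b. intros x [[_ Hx] _]. auto. }
  assert (Ene : exists x, Eset x). { exists a. split. lra. left; apply Tlow; auto. }
  destruct (completeness Eset Eb Ene) as [m [Hm1 Hm2]].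
  assert (am : a <= m) by (apply Hm1; split; [lra| left; apply Tlow; auto]).
  assert (mb : m <= b) by (apply Hm2; intros x [[_ Hx] _]; auto).
  assert (Hm0 : 0 < m) by lra.
  assert (mT : m <= T m).
  { apply Hm2. intros x [[Hx1 Hx2] Hx3]. eapply Rle_trans. apply Hx3. apply Tmono; [lra|]. apply Hm1. split; auto. }
  assert (Tm : T m <= m).
  { apply Hm1. split. split. left; apply Tlow; auto. apply Tup; auto.
    apply Tmono; auto. }
  assert (Fix : T m = m) by lra.
  destruct (Psg m Hm0) as [P1 P2]. destruct (Ptu _ P1) as [Q1 Q2].
  exists (sg m), m. unfold T in Fix. rewrite Fix in Q2.
  split; auto. split; auto. split; auto. split; auto.
  intros s t Hs Ht E1 E2.
  apply (sol_uniq K1 K2 e R1 C1 R2 C2); auto.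
Qed.


Lemma exZ_ext (f g : Z -> R) : (forall n, f n = g n) -> ex_sumZ g -> ex_sumZ f.
Proof. intros H Hg. replace f with g; auto. apply functional_extensionality; intro; auto. Qed.

Lemma logterm_scale q r (c : Z -> R) x lam n : 0 < lam -> 0 < r -> q <> 0 ->
  (if Req_EM_T (lam * x) 0 then 0 else c n * rpow (Rabs (lam * x)) q * ln (rpow (Rabs (lam * x)) r))
  = Rpower lam q * ((if Req_EM_T x 0 then 0 else c n * rpow (Rabs x) q * ln (rpow (Rabs x) r))
                    + r * ln lam * (c n * rpow (Rabs x) q)).
Proof.
  intros Hl Hr Hq. destruct (Req_EM_T x 0) as [e|ne].
  - subst x. rewrite Rmult_0_r. destruct (Req_EM_T 0 0); [|lra]. rewrite Rabs_R0.
    unfold rpow. destruct (Rle_dec 0 0); [|lra]. destruct (Req_EM_T q 0); [contradiction| ring].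
  - destruct (Req_EM_T (lam * x) 0) as [e|_]. { exfalso. apply Rmult_integral in e. lra. }
    assert (Hx : 0 < Rabs x) by (apply Rabs_pos_lt; auto).
    rewrite Rabs_mult, (Rabs_right lam) by lra.
    rewrite !rpow_pos by (try apply Rmult_lt_0_compat; auto).
    rewrite !ln_Rpower. rewrite ln_mult by auto. rewrite <- Rpower_mult_distr by auto. ring.
Qed.

Lemma logterm_w q r (c u : Z -> R) s t n : 0 < s -> 0 < t -> 0 < r -> q <> 0 -> 0 <= c n ->
  Rabs (logterm q r c (wv u s t) n) <=
  (Rpower s q + Rpower t q) * (Rabs (logterm q r c u n) + r * (Rabs (ln s) + Rabs (ln t)) * (c n * rpow (Rabs (u n)) q)).
Proof.
  intros Hs Ht Hr Hq Hc.
  assert (G : forall lam L X, (lam = s \/ lam = t) -> 0 <= X ->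
    Rabs (Rpower lam q * (L + r * ln lam * X)) <= (Rpower s q + Rpower t q) * (Rabs L + r * (Rabs (ln s) + Rabs (ln t)) * X)).
  { intros lam L X Hl HX0.
    assert (Ps : 0 < Rpower s q) by apply exp_pos. assert (Pt : 0 < Rpower t q) by apply exp_pos.
    pose proof (Rabs_pos (ln s)); pose proof (Rabs_pos (ln t)); pose proof (Rabs_pos L).
    assert (Hlam : 0 < Rpower lam q /\ Rpower lam q <= Rpower s q + Rpower t q /\ Rabs (ln lam) <= Rabs (ln s) + Rabs (ln t)).
    { destruct Hl; subst; lra. }
    rewrite Rabs_mult, (Rabs_right (Rpower lam q)) by lra.
    assert (Rabs (L + r * ln lam * X) <= Rabs L + r * (Rabs (ln s) + Rabs (ln t)) * X).
    { eapply Rle_trans. apply Rabs_triang. rewrite !Rabs_mult, (Rabs_right r), (Rabs_right X) by lra.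
      assert (r * Rabs (ln lam) * X <= r * (Rabs (ln s) + Rabs (ln t)) * X).
      { apply Rmult_le_compat_r; auto. apply Rmult_le_compat_l; lra. }
      lra. }
    apply Rmult_le_compat; try lra. apply Rabs_pos. }
  assert (X0 : 0 <= c n * rpow (Rabs (u n)) q) by (apply Rmult_le_pos; auto; apply rpow_nonneg).
  unfold logterm at 1.
  destruct (Rtotal_order (u n) 0) as [Hn|[Hz|Hp]].
  - assert (W : wv u s t n = t * u n) by (unfold wv; rewrite upos_npos, uneg_neg by lra; ring).
    rewrite W. rewrite logterm_scale by auto. apply G; auto.
  - assert (W : wv u s t n = 0) by (unfold wv; rewrite upos_npos, uneg_nneg by lra; ring).
    rewrite W. destruct (Req_EM_T 0 0); [|lra]. rewrite Rabs_R0.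
    assert (0 < Rpower s q) by apply exp_pos. assert (0 < Rpower t q) by apply exp_pos.
    pose proof (Rabs_pos (ln s)); pose proof (Rabs_pos (ln t)); pose proof (Rabs_pos (logterm q r c u n)).
    apply Rmult_le_pos. lra. apply Rplus_le_le_0_compat; auto. apply Rmult_le_pos; auto. apply Rmult_le_pos; lra.
  - assert (W : wv u s t n = s * u n) by (unfold wv; rewrite upos_pos, uneg_nneg by lra; ring).
    rewrite W. rewrite logterm_scale by auto. apply G; auto.
Qed.

Lemma pow_abs_bound (x y : R) j : Rabs x <= y -> x^(2*j+2) <= y^(2*j+2).
Proof.
  intros H. replace (2*j+2)%nat with (2*(j+1))%nat by lia. rewrite <- pow_even_abs.
  apply pow_incr. split; auto using Rabs_pos.
Qed.

Lemma pow_abs_bound2 (x y k : R) j : 0 <= k -> Rabs x <= k * Rabs y -> x^(2*j+2) <= k^(2*j+2) * y^(2*j+2).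
Proof.
  intros Hk H. replace (2*j+2)%nat with (2*(j+1))%nat by lia. rewrite <- (pow_even_abs x), <- (pow_even_abs y).
  rewrite <- Rpow_mult_distr. apply pow_incr. split; auto using Rabs_pos.
Qed.

Lemma inD_w j q r (a b c u : Z -> R) s t : (forall n, 0 < a n) -> (forall n, 0 < b n) -> (forall n, 0 < c n) ->
  0 < q -> 0 < r -> 0 < s -> 0 < t ->
  ex_sumZ (fun n => a n * (Delta u n)^(2*j+2)) -> ex_sumZ (fun n => b n * (u n)^(2*j+2)) ->
  ex_sumZ (fun n => c n * rpow (Rabs (u n)) q) -> ex_sumZ (fun n => Rabs (logterm q r c u n)) ->
  inD (INR (2*j+2)) q r a b c (wv u s t).
Proof.
  intros Ha Hb Hc Hq Hr Hs Ht HA HB HC HL. split.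
  - unfold inE.
    apply (exZ_le _ (fun n => (s+t)^(2*j+2) * (a n * (Delta u n)^(2*j+2) + b n * (u n)^(2*j+2)))).
    2: { apply exZ_scal, exZ_plus; auto. }
    intro n. rewrite !rpow_even.
    pose proof (Ha n); pose proof (Hb n).
    pose proof (pow_even_nonneg (Delta (wv u s t) n) j). pose proof (pow_even_nonneg (wv u s t n) j).
    rewrite Rabs_right by nra.
    assert (D1 : (Delta (wv u s t) n)^(2*j+2) <= (s+t)^(2*j+2) * (Delta u n)^(2*j+2)).
    { apply pow_abs_bound2; [lra|].
      replace (Delta (wv u s t) n) with (s * Delta (upos u) n + t * Delta (uneg u) n) by (unfold Delta, wv; ring).
      rewrite <- Delta_abs.
      eapply Rle_trans. apply Rabs_triang. rewrite !Rabs_mult, (Rabs_right s), (Rabs_right t) by lra.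
      pose proof (Rabs_pos (Delta (upos u) n)); pose proof (Rabs_pos (Delta (uneg u) n)). nra. }
    assert (D2 : (wv u s t n)^(2*j+2) <= (s+t)^(2*j+2) * (u n)^(2*j+2)).
    { apply pow_abs_bound2; [lra|]. pose proof (Rabs_pos (u n)).
      destruct (Rlt_le_dec 0 (u n)).
      - replace (wv u s t n) with (s * u n) by (unfold wv; rewrite upos_pos, uneg_nneg by lra; ring).
        rewrite Rabs_mult, (Rabs_right s) by lra. nra.
      - replace (wv u s t n) with (t * u n) by (unfold wv; rewrite upos_npos by lra;
          destruct (Rle_lt_or_eq_dec _ _ r0); [rewrite uneg_neg by lra| rewrite e, uneg_nneg by lra]; ring).
        rewrite Rabs_mult, (Rabs_right t) by lra. nra. }
    pose proof (pow_even_nonneg (Delta u n) j). pose proof (pow_even_nonneg (u n) j).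
    assert (a n * Delta (wv u s t) n ^ (2 * j + 2) <= a n * ((s+t)^(2*j+2) * (Delta u n)^(2*j+2))) by (apply Rmult_le_compat_l; lra).
    assert (b n * wv u s t n ^ (2 * j + 2) <= b n * ((s+t)^(2*j+2) * (u n)^(2*j+2))) by (apply Rmult_le_compat_l; lra).
    nra.
  - apply (exZ_le _ (fun n => (Rpower s q + Rpower t q) * (Rabs (logterm q r c u n) + r * (Rabs (ln s) + Rabs (ln t)) * (c n * rpow (Rabs (u n)) q)))).
    + intro n. rewrite Rabs_Rabsolu. apply logterm_w; auto. lra. left; auto.
    + apply exZ_scal, exZ_plus; auto. apply exZ_scal; auto.
Qed.


Lemma inD_neg p q r (a b c u : Z -> R) : inD p q r a b c u -> inD p q r a b c (fun n => - u n).
Proof.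
  intros [HE HL]. split.
  - unfold inE in *. apply (exZ_ext _ _) with (2 := HE). intro n. rewrite Delta_neg, !Rabs_Ropp. auto.
  - apply (exZ_ext _ _) with (2 := HL). intro n. unfold logterm. rewrite Rabs_Ropp.
    destruct (Req_EM_T (- u n) 0); destruct (Req_EM_T (u n) 0); auto; lra.
Qed.

Lemma upos_neg_nz (u : Z -> R) : uneg u <> zero_seq -> upos (fun n => - u n) <> zero_seq.
Proof.
  intros H E. apply H. apply functional_extensionality. intro n.
  pose proof (equal_f E n) as E'. unfold upos, uneg, zero_seq, Rmax, Rmin in *. cbv beta in E'.
  destruct (Rle_dec (- u n) 0); destruct (Rle_dec (u n) 0); lra.
Qed.

Lemma scale_nz (w : Z -> R) lam : 0 < lam -> w <> zero_seq -> (fun n => lam * w n) <> zero_seq.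
Proof.
  intros Hl H E. apply H. apply functional_extensionality. intro n.
  pose proof (equal_f E n) as E'. unfold zero_seq in *. cbv beta in E'.
  apply Rmult_integral in E'. destruct E'; lra.
Qed.

Lemma Bc_pos q (c v : Z -> R) : (forall n, 0 < c n) -> 0 < q -> upos v <> zero_seq ->
  ex_sumZ (fun n => c n * rpow (upos v n) q) -> 0 < Bc q c v.
Proof.
  intros Hc Hq Hv HB. destruct (nonzero_point _ Hv) as [n0 Hn0].
  unfold Bc. eapply Rlt_le_trans. 2: apply (sumZ_term _ n0); auto.
  - cbv beta. pose proof (upos_nonneg v n0). rewrite rpow_pos by lra. apply Rmult_lt_0_compat; auto. apply exp_pos.
  - intro n. apply Rmult_le_pos. left; auto. apply rpow_nonneg.
Qed.

Theorem lemma2p7 (p q r : R) (a b c : Z -> R)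
  (Hp : 1 < p) (Hpq : p < q) (Hp2 : exists k : nat, (0 < k)%nat /\ p / 2 = INR k)
  (Hr : 1 <= r)
  (Ha : forall n, 0 < a n) (Hb : forall n, 0 < b n) (Hc : forall n, 0 < c n)
  (HC1 : cond_C1 b) (HC2 : cond_C2 c)
  (u : Z -> R) (Hu : inD p q r a b c u)
  (Hup : upos u <> zero_seq) (Hun : uneg u <> zero_seq) :
  exists s0 t0 : R, 0 < s0 /\ 0 < t0 /\
    inM p q r a b c (fun n => s0 * upos u n + t0 * uneg u n) /\
    (forall s t : R, 0 < s -> 0 < t ->
       inM p q r a b c (fun n => s * upos u n + t * uneg u n) -> s = s0 /\ t = t0).
Proof.
  destruct Hp2 as [k [Hk Hpk]]. destruct k as [|j]; [lia|].
  assert (Hpj : p = INR (2*j+2)).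
  { replace (2*j+2)%nat with (2 * S j)%nat by lia. rewrite mult_INR. change (INR 2) with 2. lra. }
  subst p.
  destruct HC1 as [[b0 [Hb0 Hbb]] _]. destruct HC2 as [[c0 [Hc0 Hcc]] _].
  assert (Hq : 0 < q) by lra. assert (Hq0 : q <> 0) by lra. assert (Hr0 : 0 < r) by lra.
  set (nu := fun n => - u n).
  assert (Hu2 : inD (INR (2*j+2)) q r a b c nu) by (apply inD_neg; auto).
  assert (Hnu : upos nu <> zero_seq) by (apply upos_neg_nz; auto).
  destruct (sums_of_D j q r a b c u b0 c0 Ha Hb Hc Hb0 Hbb Hcc Hr Hq Hu) as [HA1 [HB1 [HC1 HL1]]].
  destruct (sums_of_D j q r a b c nu b0 c0 Ha Hb Hc Hb0 Hbb Hcc Hr Hq Hu2) as [HA2 [HB2 [HC2 HL2]]].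
  pose proof (exB q c u Hc Hq HC1) as XB1. pose proof (exC q r c u HL1) as XC1.
  pose proof (exB q c nu Hc Hq HC2) as XB2. pose proof (exC q r c nu HL2) as XC2.
  set (e := q - INR (2*j+2)).
  assert (He : 0 < e) by (unfold e; lra).
  set (R1 := r * Bc q c u). set (C1 := Cc q r c u).
  set (R2 := r * Bc q c nu). set (C2 := Cc q r c nu).
  assert (HR1 : 0 < R1) by (unfold R1; apply Rmult_lt_0_compat; auto; apply Bc_pos; auto).
  assert (HR2 : 0 < R2) by (unfold R2; apply Rmult_lt_0_compat; auto; apply Bc_pos; auto).
  assert (G1 : Kgood (Kf j a b u) e R1 C1).
  { split; [|split].
    - intros x y Hx Hxy. apply Kf_mono; auto.
    - intros x Hx. apply Kf_pos; auto.
    - intros t s Hs. apply phi_cont; auto. }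
  assert (G2 : Kgood (Kf j a b nu) e R2 C2).
  { split; [|split].
    - intros x y Hx Hxy. apply Kf_mono; auto.
    - intros x Hx. apply Kf_pos; auto.
    - intros t s Hs. apply phi_cont; auto. }
  assert (E1 : forall s t, 0 < s -> 0 < t ->
    dI (INR (2*j+2)) q r a b c (wv u s t) (upos (wv u s t)) = s^(2*j+2) * (Kf j a b u (t/s) - gg e R1 C1 s)).
  { intros s t Hs Ht. rewrite (decomp j (INR (2*j+2)) q r a b c u s t); auto. }
  assert (E2 : forall s t, 0 < s -> 0 < t ->
    dI (INR (2*j+2)) q r a b c (wv u s t) (uneg (wv u s t)) = t^(2*j+2) * (Kf j a b nu (s/t) - gg e R2 C2 t)).
  { intros s t Hs Ht. rewrite sym_neg by auto. fold nu.
    rewrite (decomp j (INR (2*j+2)) q r a b c nu t s); auto. }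
  destruct (abstract_main (Kf j a b u) (Kf j a b nu) e R1 C1 R2 C2 He HR1 HR2 G1 G2)
    as [s0 [t0 [Hs0 [Ht0 [F1 [F2 Uniq]]]]]].
  exists s0, t0. split; auto. split; auto.
  change (fun n => s0 * upos u n + t0 * uneg u n) with (wv u s0 t0).
  split.
  - split; [apply inD_w; auto|].
    split; [|split; [|split]].
    + replace (upos (wv u s0 t0)) with (fun n => s0 * upos u n).
      apply scale_nz; auto. apply functional_extensionality; intro n; rewrite upos_w; auto.
    + replace (uneg (wv u s0 t0)) with (fun n => t0 * uneg u n).
      apply scale_nz; auto. apply functional_extensionality; intro n; rewrite uneg_w; auto.
    + rewrite E1 by auto. rewrite F1. ring.
    + rewrite E2 by auto. rewrite F2. ring.
  - intros s t Hs Ht HM.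
    change (fun n => s * upos u n + t * uneg u n) with (wv u s t) in HM.
    destruct HM as [_ [_ [_ [D1 D2]]]].
    rewrite E1 in D1 by auto. rewrite E2 in D2 by auto.
    apply Rmult_integral in D1. apply Rmult_integral in D2.
    destruct D1 as [D1|D1]. { exfalso. apply (pow_nonzero s (2*j+2)); lra. }
    destruct D2 as [D2|D2]. { exfalso. apply (pow_nonzero t (2*j+2)); lra. }
    apply Uniq; auto; lra.
Qed.
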